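(* Let $G$ be a finite group of nilpotency class at most $2$ and $w\in F_2$. Let $e=\exp(G)$, $e'=\exp([G,G])$ and $f=\exp(G/Z(G))$, and for $r\in\mathbb N$ let $\mathcal P_r$ be the set of prime divisors of $r$. Then there exist $m,n\in\mathbb N$ with $\mathcal P_m\subseteq\mathcal P_e$, $\mathcal P_n\subseteq\mathcal P_f$ and $n\le e'$ such that $w(G)=v(G)$ where $v=x^m[x,y^n]$.
   Context: $[a,b]=aba^{-1}b^{-1}$; $x,y$ are the free generators of $F_2$; for $w\in F_2$, $w(G)=\{w(a,b):a,b\in G\}$. Nilpotency class at most 2 means $[G,G]\subseteq Z(G)$. *)

(* Defs.v *)
From mathcomp Require Import all_boot all_fingroup all_solvable.
Set Implicit Arguments. Unset Strict Implicit. Unset Printing Implicit Defensive.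

(* Elements of the free group F_2 = <x, y>, represented by group terms.
   Every element of F_2 is represented by such a term, and the word map
   depends only on the element represented, so quantifying over terms is
   the same as quantifying over F_2. *)
Inductive word : Type :=
  | wX : word
  | wY : word
  | w1 : word
  | wInv : word -> word
  | wMul : word -> word -> word.

Local Open Scope group_scope.

Fixpoint weval (gT : finGroupType) (w : word) (a b : gT) : gT :=
  match w with
  | wX => a
  | wY => b
  | w1 => 1
  | wInv u => (weval u a b)^-1
  | wMul u v => weval u a b * weval v a b
  end.

Definition word_image (gT : finGroupType) (w : word) (G : {set gT}) : {set gT} :=
  [set weval w a b | a in G, b in G].

(* Commutator with the paper's convention [a,b] = a b a^-1 b^-1. *)
Definition pcomm (gT : finGroupType) (a b : gT) : gT := a * b * a^-1 * b^-1.

Definition vword (m n : nat) : word :=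
  let fix pw (u : word) (k : nat) : word :=
    match k with 0 => w1 | k'.+1 => wMul (pw u k') u end in
  let xm := pw wX m in
  let yn := pw wY n in
  wMul xm (wMul (wMul (wMul wX yn) (wInv wX)) (wInv yn)).

Definition class_le2 (gT : finGroupType) (G : {group gT}) : bool :=
  [~: G, G] \subset 'Z(G).

Definition prime_divs (r : nat) : pred nat := [pred p | prime p && (p %| r)%N].

(* Main.v *)
Require Import Defs.
From mathcomp Require Import all_boot all_fingroup all_solvable.
Set Implicit Arguments. Unset Strict Implicit. Unset Printing Implicit Defensive.
Local Open Scope group_scope.

Definition Wf (gT : finGroupType) (r s t : nat) (a b : gT) : gT :=
  a ^+ r * b ^+ s * [~ a, b] ^+ t.

Lemma cl2_central (gT : finGroupType) (G : {group gT}) (x y z : gT) :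
  class_le2 G -> x \in G -> y \in G -> z \in G -> commute z [~ x, y].
Proof.
move=> H xG yG zG.
have : [~ x, y] \in 'Z(G) by apply: (subsetP H); apply: mem_commg.
by case/centerP=> _ /(_ z zG) C.
Qed.

Lemma cent_mid (gT : finGroupType) (x y z : gT) :
  commute y z -> x * z * y = x * y * z.
Proof. by move=> C; rewrite -mulgA -C mulgA. Qed.

Lemma inv_pow (gT : finGroupType) (G : {group gT}) (x : gT) :
  x \in G -> x^-1 = x ^+ (exponent G).-1.
Proof.
move=> xG; have H := expg_exponent xG.
rewrite -(prednK (exponent_gt0 G)) expgSr in H.
by rewrite -[x^-1]mul1g -H -mulgA mulgV mulg1.
Qed.

Lemma commV (gT : finGroupType) (G : {group gT}) (a b : gT) :
  class_le2 G -> a \in G -> b \in G -> [~ b, a] = [~ a, b] ^+ (exponent G).-1.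
Proof.
move=> H aG bG; rewrite -invgR; apply: inv_pow; rewrite groupR //.
Qed.

Lemma commXX (gT : finGroupType) (G : {group gT}) (a b : gT) i j :
  class_le2 G -> a \in G -> b \in G -> [~ a ^+ i, b ^+ j] = [~ a, b] ^+ (i * j).
Proof.
move=> H aG bG; apply: commXXg; exact: (cl2_central H).
Qed.

Lemma W_mul (gT : finGroupType) (G : {group gT}) r1 s1 t1 r2 s2 t2 a b :
  class_le2 G -> a \in G -> b \in G ->
  Wf r1 s1 t1 a b * Wf r2 s2 t2 a b =
  Wf (r1 + r2) (s1 + s2) (t1 + t2 + (exponent G).-1 * (s1 * r2))%N a b.
Proof.
move=> H aG bG; rewrite /Wf.
have Cz : forall z k, z \in G -> commute z ([~ a, b] ^+ k).
  by move=> z k zG; apply: commuteX; apply: (cl2_central H).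
have E : b ^+ s1 * a ^+ r2 = a ^+ r2 * b ^+ s1 * [~ a, b] ^+ ((exponent G).-1 * (s1 * r2))%N.
  by rewrite commgC (commXX _ _ H) // (commV H) // -expgnA.
rewrite !expgD !mulgA.
rewrite (cent_mid _ (Cz _ t1 (groupX r2 aG))).
rewrite (cent_mid _ (Cz _ t1 (groupX s2 bG))).
rewrite -(mulgA (a ^+ r1) (b ^+ s1)) E !mulgA.
rewrite (cent_mid _ (Cz _ _ (groupX s2 bG))).
rewrite -!mulgA; do 4 congr (_ * _).
by rewrite -!expgD addnC addnA.
Qed.

Lemma W_swap (gT : finGroupType) (G : {group gT}) r s t a b :
  class_le2 G -> a \in G -> b \in G ->
  Wf r s t b a = Wf s r ((exponent G).-1 * (r * s + t))%N a b.
Proof.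
move=> H aG bG; rewrite /Wf (commgC (b ^+ r)) (commXX _ _ H) // (commV H) // -!expgnA.
by rewrite -mulgA -expgD mulnDr.
Qed.

Lemma W_sub (gT : finGroupType) (G : {group gT}) r s t k a b :
  class_le2 G -> a \in G -> b \in G ->
  Wf r s t (a * b ^+ k) b = Wf r (k * r + s)%N (t + (exponent G).-1 * (k * 'C(r, 2)))%N a b.
Proof.
move=> H aG bG; rewrite /Wf.
have bkG : b ^+ k \in G by rewrite groupX.
rewrite expMg_Rmul; last 2 first.
- exact: (cl2_central H).
- exact: (cl2_central H).
rewrite (commMgJ a (b ^+ k) b).
have -> : [~ b ^+ k, b] = 1.
  by apply/eqP/commgP; apply: commute_sym; apply: commuteX.
rewrite mulg1.
have -> : [~ a, b] ^ b ^+ k = [~ a, b].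
  by rewrite conjgE -(cl2_central H aG bG bkG) mulgA mulVg mul1g.
rewrite (commXg _ (cl2_central H bG aG bG)) (commV H aG bG) -!expgnA.
rewrite !expgD -!mulgA; congr (_ * (_ * _)).
rewrite mulgA !mulnA -(commuteX _ (cl2_central H aG bG (groupX s bG))).
rewrite -mulgA; congr (_ * _); exact: commuteX2 (commute_refl _).
Qed.

Lemma W_mod (gT : finGroupType) (G : {group gT}) r s t a b :
  class_le2 G -> a \in G -> b \in G ->
  Wf r s t a b = Wf (r %% exponent G) (s %% exponent G) (t %% exponent G) a b.
Proof.
move=> H aG bG; rewrite /Wf.
rewrite (expg_mod _ (expg_exponent aG)) (expg_mod _ (expg_exponent bG)).
by rewrite (expg_mod _ (expg_exponent (groupR aG bG))).
Qed.

Lemma W_pow (gT : finGroupType) (G : {group gT}) r s t k :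
  class_le2 G -> exists r' s' t', forall a b, a \in G -> b \in G ->
    (Wf r s t a b) ^+ k = Wf r' s' t' a b.
Proof.
move=> H; elim: k => [|k [r' [s' [t' IH]]]].
  by exists 0%N, 0%N, 0%N => a b _ _; rewrite /Wf !expg0 !mulg1.
eexists; eexists; eexists => a b aG bG.
by rewrite expgSr IH // (W_mul _ _ _ _ _ _ H aG bG).
Qed.

Lemma W_repr (gT : finGroupType) (G : {group gT}) w :
  class_le2 G -> exists r s t, forall a b, a \in G -> b \in G ->
    weval w a b = Wf r s t a b.
Proof.
move=> H; elim: w => [|||u [r [s [t IH]]]|u [r1 [s1 [t1 IH1]]] v [r2 [s2 [t2 IH2]]]].
- by exists 1%N, 0%N, 0%N => a b _ _; rewrite /Wf /= expg1 !expg0 !mulg1.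
- by exists 0%N, 1%N, 0%N => a b _ _; rewrite /Wf /= expg1 !expg0 mulg1 mul1g.
- by exists 0%N, 0%N, 0%N => a b _ _; rewrite /Wf /= !expg0 !mulg1.
- have [r' [s' [t' E]]] := W_pow r s t (exponent G).-1 H.
  exists r', s', t' => a b aG bG /=.
  rewrite IH // -E // -(inv_pow (G:=G)) //.
  by rewrite /Wf !groupM ?groupX ?groupR.
- eexists; eexists; eexists => a b aG bG /=.
  by rewrite IH1 // IH2 // (W_mul _ _ _ _ _ _ H aG bG).
Qed.

Lemma img_eq (gT : finGroupType) (G : {group gT}) (F1 F2 : gT -> gT -> gT) :
  (forall a b, a \in G -> b \in G -> exists a' b', [/\ a' \in G, b' \in G & F1 a b = F2 a' b']) ->
  (forall a b, a \in G -> b \in G -> exists a' b', [/\ a' \in G, b' \in G & F2 a b = F1 a' b']) ->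
  [set F1 a b | a in G, b in G] = [set F2 a b | a in G, b in G].
Proof.
move=> H1 H2; apply/setP => x; apply/imset2P/imset2P.
- by case=> a b aG bG ->; have [a' [b' [? ? ->]]] := H1 a b aG bG; exact: (Imset2spec (x1:=a') (x2:=b')).
- by case=> a b aG bG ->; have [a' [b' [? ? ->]]] := H2 a b aG bG; exact: (Imset2spec (x1:=a') (x2:=b')).
Qed.

Definition Sset (gT : finGroupType) (G : {group gT}) r s t :=
  [set Wf r s t a b | a in G, b in G].

Lemma S_swap (gT : finGroupType) (G : {group gT}) r s t :
  class_le2 G -> Sset G r s t = Sset G s r ((exponent G).-1 * (r * s + t))%N.
Proof.
move=> H; apply: img_eq => a b aG bG.
- by exists b, a; split => //; rewrite (W_swap _ _ _ H bG aG).
- by exists b, a; split => //; rewrite (W_swap _ _ _ H aG bG).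
Qed.

Lemma S_sub (gT : finGroupType) (G : {group gT}) r s t k :
  class_le2 G -> Sset G r s t = Sset G r (k * r + s)%N (t + (exponent G).-1 * (k * 'C(r, 2)))%N.
Proof.
move=> H; apply: img_eq => a b aG bG.
- exists (a * (b ^+ k)^-1), b; split => //; first by rewrite groupM ?groupV ?groupX.
  by rewrite -(W_sub _ _ _ _ H) ?groupM ?groupV ?groupX // mulgKV.
- by exists (a * b ^+ k), b; split => //; [rewrite groupM ?groupX | rewrite (W_sub _ _ _ _ H)].
Qed.

Lemma S_mod (gT : finGroupType) (G : {group gT}) r s t r' s' t' :
  class_le2 G -> r %% exponent G = r' %% exponent G ->
  s %% exponent G = s' %% exponent G -> t %% exponent G = t' %% exponent G ->
  Sset G r s t = Sset G r' s' t'.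
Proof.
move=> H Er Es Et; apply: img_eq => a b aG bG; exists a, b; split => //;
  by rewrite (W_mod r s t H aG bG) (W_mod r' s' t' H aG bG) Er Es Et.
Qed.

Lemma S_mods (gT : finGroupType) (G : {group gT}) r s t s' :
  class_le2 G -> s %% exponent G = s' %% exponent G -> Sset G r s t = Sset G r s' t.
Proof. by move=> H Es; apply: S_mod. Qed.

From mathcomp Require Import zify.

Lemma S_gcd (gT : finGroupType) (G : {group gT}) r s t :
  class_le2 G -> exists t', Sset G r s t = Sset G (gcdn r s) 0 t'.
Proof.
move=> H; elim: r.+1 {-2}r (ltnSn r) s t => // N IH [|m] Hr s t.
  by rewrite gcd0n; eexists; apply: S_swap.
set q := s %/ m.+1.
rewrite (S_sub _ _ _ (q * (exponent G).-1) H).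
rewrite (@S_mods _ _ _ _ _ (s %% m.+1) H); last first.
  have -> : (q * (exponent G).-1 * m.+1 + s = q * m.+1 * exponent G + s %% m.+1)%N.
    have hs := divn_eq s m.+1; rewrite -/q in hs.
    have he := prednK (exponent_gt0 G).
    move: (exponent G) he => E he; move: (E.-1) he => p <-.
    nia.
  by rewrite modnMDl.
rewrite S_swap //.
have [t' ->] := IH (s %% m.+1) (leq_trans (ltn_pmod s (ltn0Sn m)) Hr) m.+1 ((exponent G).-1 * (m.+1 * (s %% m.+1) + (t + (exponent G).-1 * (q * (exponent G).-1 * 'C(m.+1, 2)))))%N.
by exists t'; rewrite gcdn_modl gcdnC.
Qed.

Lemma Zpow (gT : finGroupType) (G : {group gT}) b :
  b \in G -> b ^+ exponent (G / 'Z(G)) \in 'Z(G).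
Proof.
move=> bG.
have bN : b \in 'N('Z(G)) by apply: (subsetP (normal_norm (center_normal G))).
apply: coset_idr; first by rewrite groupX.
by rewrite morphX // expg_exponent // mem_quotient.
Qed.

Lemma fdiv (gT : finGroupType) (G : {group gT}) :
  class_le2 G -> exponent (G / 'Z(G)) %| exponent [~: G, G].
Proof.
move=> H; apply/exponentP => X /morphimP[a aN aG ->].
rewrite -morphX //; apply: coset_id; apply/centerP; split; first by rewrite groupX.
move=> y yG; apply/commgP.
by rewrite (commXg _ (cl2_central H aG yG aG)) expg_exponent // mem_commg.
Qed.

Lemma sq_pred_mod (q : nat) : (0 < q)%N -> (((q.-1) * (q.-1)) %% q = 1 %% q)%N.
Proof.
case: q => [|q] // _. case: q => [|k] //.
have -> : (k.+1 * k.+1 = k * k.+2 + 1)%N by nia.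
by rewrite modnMDl.
Qed.

Fixpoint pw' (u : word) (k : nat) : word :=
  match k with 0 => w1 | k'.+1 => wMul (pw' u k') u end.

Lemma vword_eq m n : vword m n =
  wMul (pw' wX m) (wMul (wMul (wMul wX (pw' wY n)) (wInv wX)) (wInv (pw' wY n))).
Proof. by []. Qed.

Lemma weval_pw (gT : finGroupType) u k (a b : gT) :
  weval (pw' u k) a b = weval u a b ^+ k.
Proof. by elim: k => [|k IH] //=; rewrite IH expgSr. Qed.

Lemma weval_v (gT : finGroupType) (G : {group gT}) m n a b :
  class_le2 G -> a \in G -> b \in G ->
  weval (vword m n) a b = a ^+ m * [~ a, b ^+ n].
Proof.
move=> H aG bG; rewrite vword_eq /= !weval_pw /=; congr (_ * _).
have bnG : b ^+ n \in G by rewrite groupX.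
have -> : a * b ^+ n * a^-1 * (b ^+ n)^-1 = [~ a^-1, (b ^+ n)^-1].
  by rewrite /commg conjgE !invgK !mulgA.
rewrite (inv_pow aG) (inv_pow bnG) (commXX _ _ H) //.
rewrite -(expg_mod _ (expg_exponent (groupR aG bnG))) (sq_pred_mod (exponent_gt0 G)).
by rewrite (expg_mod _ (expg_exponent (groupR aG bnG))) expg1.
Qed.

Lemma final_eq (gT : finGroupType) (G : {group gT}) m t :
  class_le2 G ->
  Sset G m 0 t = word_image (vword m (gcdn t (exponent (G / 'Z(G))))) G.
Proof.
move=> H; set f := exponent (G / 'Z(G)); set n := gcdn t f.
have fpos : (0 < f)%N by apply: exponent_gt0.
have npos : (0 < n)%N by rewrite gcdn_gt0 fpos orbT.
apply: img_eq => a b aG bG.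
- exists a, (b ^+ (t %/ n)); split; first by [].
    by rewrite groupX.
  rewrite (weval_v _ _ H aG (groupX _ bG)) /Wf expg0 mulg1; congr (_ * _).
  rewrite -expgnA divnK ?dvdn_gcdl //.
  by rewrite (commgX _ (cl2_central H aG bG bG)).
- have [u _ hu] := Bezoutl t fpos.
  exists a, (b ^+ (u * (exponent G).-1)); split; first by [].
    by rewrite groupX.
  rewrite (weval_v _ _ H aG bG) /Wf expg0 mulg1; congr (_ * _).
  set c := [~ a, b].
  have cG : c \in G by rewrite groupR.
  have Cb : commute b c by apply: (cl2_central H).
  have cf : c ^+ f = 1.
    rewrite /c -(commgX _ Cb); apply/eqP/commgP.
    by have /centerP[_ /(_ a aG)] := Zpow bG.
  rewrite (commgX _ Cb) (commgX _ Cb) -/c.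
  have h1 : c ^+ (n + u * t) = 1.
    by rewrite -(expg_mod _ cf) -/n gcdnC in hu *; rewrite (eqP hu) expg0.
  rewrite -expgnA -mulnA (mulnC _ t) mulnA expgnA -(inv_pow (groupX (u * t) cG)).
  by rewrite -[LHS]mulg1 -(mulgV (c ^+ (u * t))) mulgA -expgD h1 mul1g.
Qed.

Theorem lemma3p6 (gT : finGroupType) (G : {group gT}) (w : word) :
  class_le2 G ->
  exists m n : nat,
    {subset prime_divs m <= prime_divs (exponent G)} /\
    {subset prime_divs n <= prime_divs (exponent (G / 'Z(G)))} /\
    (n <= exponent [~: G, G])%N /\
    word_image w G = word_image (vword m n) G.
Proof.
move=> H.
have [r [s [t E]]] := W_repr w H.
have E1 : word_image w G = Sset G r s t.
  by apply: img_eq => a b aG bG; exists a, b; split; rewrite ?E.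
have [t1 E2] := S_gcd r s t H.
have E3 : Sset G (gcdn r s) 0 t1 = Sset G (gcdn r s) (exponent G) t1.
  by apply: S_mods => //; rewrite mod0n modnn.
have [t2 E4] := S_gcd (gcdn r s) (exponent G) t1 H.
exists (gcdn (gcdn r s) (exponent G)), (gcdn t2 (exponent (G / 'Z(G)))).
split; last split; last split.
- move=> p; rewrite /prime_divs !inE /= => /andP[pp pd].
  by rewrite pp (dvdn_trans pd (dvdn_gcdr _ _)).
- move=> p; rewrite /prime_divs !inE /= => /andP[pp pd].
  by rewrite pp (dvdn_trans pd (dvdn_gcdr _ _)).
- apply: dvdn_leq; first exact: exponent_gt0.
  exact: dvdn_trans (dvdn_gcdr _ _) (fdiv H).
- by rewrite E1 E2 E3 E4 final_eq.
Qed.
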